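(* Let $\{\tilde\alpha,\tilde\beta\}$ be a dual timelike - spacelike Mannheim pair in $ID_1^3$. Then the dual curvature $P$ and dual torsion $Q$ of $\tilde\beta$ and the dual torsion $\tau$ of $\tilde\alpha$ satisfy $$P^2-Q^2=\tau^2\left(\frac{ds}{ds^*}\right)^2.$$
   Context: Dual numbers: $ID=\{a+\varepsilon a^*: a,a^*\in\mathbb R\}$ with $\varepsilon^2=0$. $ID_1^3$ is $ID^3$ with dual Lorentzian inner product $\langle \vec A,\vec B\rangle=\langle\vec a,\vec b\rangle+\varepsilon(\langle\vec a,\vec b^*\rangle+\langle\vec a^*,\vec b\rangle)$, $\langle\vec a,\vec b\rangle=-a_1b_1+a_2b_2+a_3b_3$. $\tilde\alpha$ is a dual timelike curve with dual arc length $s$, Frenet frame $\{T,N,B\}$ ($T$ timelike, $N,B$ spacelike unit), $T'=\kappa N$, $N'=\kappa T+\tau B$, $B'=-\tau N$. $\tilde\beta$ is a dual spacelike curve with dual timelike binormal, arc length $s^*$, frame $\{V_1,V_2,V_3\}$ ($V_3$ timelike), $V_1'=PV_2$, $V_2'=-PV_1+QV_3$, $V_3'=QV_2$. A dual timelike - spacelike Mannheim pair means that under a correspondence $s\mapsto s^*$ the dual binormal line of $\tilde\alpha$ coincides with the dual principal normal line of $\tilde\beta$ at corresponding points, i.e. $\tilde\beta(s^* )=\tilde\alpha(s)+\lambda B(s)$. *)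

(* Defs.v *)
From Stdlib Require Import Reals.
From Coquelicot Require Import Coquelicot.
Open Scope R_scope.

(** Dual numbers ID = { a + eps a_ }, eps^2 = 0. *)
Record dual := mkD { re : R; du : R }.

Definition dzero : dual := mkD 0 0.
Definition done_ : dual := mkD 1 0.
Definition dadd (x y : dual) : dual := mkD (re x + re y) (du x + du y).
Definition dopp (x : dual) : dual := mkD (- re x) (- du x).
Definition dsub (x y : dual) : dual := dadd x (dopp y).
Definition dmul (x y : dual) : dual :=
  mkD (re x * re y) (re x * du y + du x * re y).
(* inverse of a dual number with nonzero real part:
   (a + eps a')^-1 = 1/a - eps a'/a^2 *)
Definition dinv (x : dual) : dual := mkD (/ re x) (- du x / (re x * re x)).
Definition ddiv (x y : dual) : dual := dmul x (dinv y).
Definition dsq (x : dual) : dual := dmul x x.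

Record dvec := mkV { c1 : dual; c2 : dual; c3 : dual }.

Definition vadd (A B : dvec) : dvec :=
  mkV (dadd (c1 A) (c1 B)) (dadd (c2 A) (c2 B)) (dadd (c3 A) (c3 B)).
Definition vscale (k : dual) (A : dvec) : dvec :=
  mkV (dmul k (c1 A)) (dmul k (c2 A)) (dmul k (c3 A)).
Definition vopp (A : dvec) : dvec := vscale (dopp done_) A.

(** Dual Lorentzian inner product on ID^3_1:
    <A,B> = -A1 B1 + A2 B2 + A3 B3 computed in the dual numbers, which is
    exactly <a,b> + eps (<a,b_> + <a_,b>). *)
Definition dinner (A B : dvec) : dual :=
  dadd (dopp (dmul (c1 A) (c1 B))) (dadd (dmul (c2 A) (c2 B)) (dmul (c3 A) (c3 B))).

Definition dual_derive (f : R -> dual) (t : R) (d : dual) : Prop :=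
  is_derive (fun u => re (f u)) t (re d) /\ is_derive (fun u => du (f u)) t (du d).

Definition vec_derive (F : R -> dvec) (t : R) (D : dvec) : Prop :=
  dual_derive (fun u => c1 (F u)) t (c1 D) /\
  dual_derive (fun u => c2 (F u)) t (c2 D) /\
  dual_derive (fun u => c3 (F u)) t (c3 D).

(** Dual timelike curve alpha with dual arc length s (ds/dt = sigma) and
    Frenet frame {T,N,B}, T timelike, N, B spacelike:
    dT/ds = kappa N, dN/ds = kappa T + tau B, dB/ds = - tau N,
    where d/ds = (1/sigma) d/dt, i.e. d/dt = sigma d/ds. *)
Definition timelike_frenet (alpha T N Bn : R -> dvec) (s sigma kappa tau : R -> dual)
  : Prop :=
  forall t,
    re (sigma t) <> 0 /\
    dual_derive s t (sigma t) /\
    vec_derive alpha t (vscale (sigma t) (T t)) /\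
    dinner (T t) (T t) = dopp done_ /\
    dinner (N t) (N t) = done_ /\
    dinner (Bn t) (Bn t) = done_ /\
    dinner (T t) (N t) = dzero /\
    dinner (T t) (Bn t) = dzero /\
    dinner (N t) (Bn t) = dzero /\
    vec_derive T t (vscale (sigma t) (vscale (kappa t) (N t))) /\
    vec_derive N t (vscale (sigma t)
                      (vadd (vscale (kappa t) (T t)) (vscale (tau t) (Bn t)))) /\
    vec_derive Bn t (vscale (sigma t) (vopp (vscale (tau t) (N t)))).

(** Dual spacelike curve beta with dual timelike binormal V3, dual arc
    length s^ (ds^/dt = sigmas), Frenet frame {V1,V2,V3}:
    V1' = P V2, V2' = - P V1 + Q V3, V3' = Q V2  (derivatives in s^). *)
Definition spacelike_tbinormal_frenet (beta V1 V2 V3 : R -> dvec)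
  (ss sigmas P Q : R -> dual) : Prop :=
  forall t,
    re (sigmas t) <> 0 /\
    dual_derive ss t (sigmas t) /\
    vec_derive beta t (vscale (sigmas t) (V1 t)) /\
    dinner (V1 t) (V1 t) = done_ /\
    dinner (V2 t) (V2 t) = done_ /\
    dinner (V3 t) (V3 t) = dopp done_ /\
    dinner (V1 t) (V2 t) = dzero /\
    dinner (V1 t) (V3 t) = dzero /\
    dinner (V2 t) (V3 t) = dzero /\
    vec_derive V1 t (vscale (sigmas t) (vscale (P t) (V2 t))) /\
    vec_derive V2 t (vscale (sigmas t)
                       (vadd (vopp (vscale (P t) (V1 t))) (vscale (Q t) (V3 t)))) /\
    vec_derive V3 t (vscale (sigmas t) (vscale (Q t) (V2 t))).

(** Dual timelike - spacelike Mannheim pair: at corresponding points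
    (same parameter t) the dual binormal line of alpha coincides with the
    dual principal normal line of beta: beta = alpha + lambda B and the unit
    directions agree up to sign (V2 = +-B). *)
Definition mannheim_pair (alpha Bn beta V2 : R -> dvec) (lambda : R -> dual) : Prop :=
  forall t,
    beta t = vadd (alpha t) (vscale (lambda t) (Bn t)) /\
    (V2 t = Bn t \/ V2 t = vopp (Bn t)).

(* Main.v *)
From Pilot Require Import Defs.
From Stdlib Require Import Reals Lra.
From Coquelicot Require Import Coquelicot.
Import Pilot.Defs.

Lemma dual_eq (x y : dual) : re x = re y -> du x = du y -> x = y.
Proof. destruct x, y; simpl; intros; subst; reflexivity. Qed.

Lemma dvec_eq (A B : dvec) : c1 A = c1 B -> c2 A = c2 B -> c3 A = c3 B -> A = B.
Proof. destruct A, B; simpl; intros; subst; reflexivity. Qed.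

Ltac dsolve := apply dual_eq; simpl; ring.

Lemma dinner_scale_l k A B : dinner (vscale k A) B = dmul k (dinner A B).
Proof. destruct A, B; unfold dinner; simpl; dsolve. Qed.
Lemma dinner_scale_r k A B : dinner A (vscale k B) = dmul k (dinner A B).
Proof. destruct A, B; unfold dinner; simpl; dsolve. Qed.
Lemma dinner_add_l A B C : dinner (vadd A B) C = dadd (dinner A C) (dinner B C).
Proof. destruct A, B, C; unfold dinner; simpl; dsolve. Qed.
Lemma dinner_add_r A B C : dinner A (vadd B C) = dadd (dinner A B) (dinner A C).
Proof. destruct A, B, C; unfold dinner; simpl; dsolve. Qed.
Lemma dinner_sym A B : dinner A B = dinner B A.
Proof. destruct A, B; unfold dinner; simpl; dsolve. Qed.

Lemma key (V1 V3 N : dvec) (sp sg P Q tau : dual) :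
  re sp <> 0 -> dinner V1 V1 = done_ -> dinner V3 V3 = dopp done_ ->
  dinner V1 V3 = dzero -> dinner N N = done_ ->
  (vscale sp (vadd (vopp (vscale P V1)) (vscale Q V3)) =
     vscale sg (vopp (vscale tau N)) \/
   vscale sp (vadd (vopp (vscale P V1)) (vscale Q V3)) =
     vopp (vscale sg (vopp (vscale tau N)))) ->
  dsub (dsq P) (dsq Q) = dmul (dsq tau) (dsq (ddiv sg sp)).
Proof.
  intros Hsp H11 H33 H13 HNN Hd.
  assert (E : dinner (vscale sp (vadd (vopp (vscale P V1)) (vscale Q V3)))
                     (vscale sp (vadd (vopp (vscale P V1)) (vscale Q V3)))
            = dinner (vscale sg (vopp (vscale tau N))) (vscale sg (vopp (vscale tau N)))).
  { destruct Hd as [Hd|Hd]; rewrite Hd; [reflexivity|].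
    unfold vopp. rewrite !dinner_scale_l, !dinner_scale_r. dsolve. }
  unfold vopp in E.
  rewrite !dinner_scale_l, !dinner_scale_r, !dinner_add_l, !dinner_add_r in E.
  rewrite !dinner_scale_l, !dinner_scale_r in E.
  rewrite (dinner_sym V3 V1), H11, H33, H13, HNN in E.
  destruct sp as [a a'], sg as [b b'], P as [p p'], Q as [q q'], tau as [c c'].
  simpl in Hsp.
  injection E; clear E; intros E2 E1.
  apply dual_eq; simpl in *.
  - apply (Rmult_eq_reg_l (a*a)); [|apply Rmult_integral_contrapositive; tauto].
    field_simplify; [|auto]. nra.
  - apply (Rmult_eq_reg_l (a*a*a)); [|repeat apply Rmult_integral_contrapositive_currified; auto].
    field_simplify; [|auto]. pose proof (f_equal (Rmult a) E2); pose proof (f_equal (Rmult a') E1). lra.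
Qed.

Lemma vec_derive_unique F t D1 D2 : vec_derive F t D1 -> vec_derive F t D2 -> D1 = D2.
Proof.
  intros [[a1 b1] [[a2 b2] [a3 b3]]] [[e1 f1] [[e2 f2] [e3 f3]]].
  apply is_derive_unique in a1, b1, a2, b2, a3, b3, e1, f1, e2, f2, e3, f3.
  apply dvec_eq; apply dual_eq; congruence.
Qed.

Lemma vec_derive_ext_loc F G t D :
  locally t (fun u => F u = G u) -> vec_derive F t D -> vec_derive G t D.
Proof.
  intros HL [[a1 b1] [[a2 b2] [a3 b3]]].
  split; [split|split; [split|split]]; (eapply is_derive_ext_loc; [|eassumption]);
    (eapply filter_imp; [|exact HL]); intros u Hu; simpl; rewrite Hu; reflexivity.
Qed.

Lemma lin2 f g t df dg k m : is_derive f t df -> is_derive g t dg ->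
  is_derive (fun u => k * f u + m * g u) t (k * df + m * dg).
Proof.
  intros Hf Hg. apply (is_derive_plus (fun u => k * f u) (fun u => m * g u));
  apply is_derive_scal; assumption.
Qed.

Lemma vec_derive_opp F t D :
  vec_derive F t D -> vec_derive (fun u => vopp (F u)) t (vopp D).
Proof.
  intros [[a1 b1] [[a2 b2] [a3 b3]]].
  split; [split|split; [split|split]]; simpl.
  all: first [ apply (is_derive_scal _ _ (-(1))); assumption
             | apply lin2; assumption ].


Qed.

Lemma sign_loc (V2 Bn : R -> dvec) t D2 DB :
  (forall u, dinner (Bn u) (Bn u) = done_) ->
  (forall u, V2 u = Bn u \/ V2 u = vopp (Bn u)) ->
  vec_derive V2 t D2 -> vec_derive Bn t DB -> D2 = DB \/ D2 = vopp DB.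
Proof.
  intros HB Hs HV HD.
  set (g := (fun u : R => (plus (opp (re (c1 (V2 u)) * re (c1 (Bn u))))
                     (plus (re (c2 (V2 u)) * re (c2 (Bn u)))
                           (re (c3 (V2 u)) * re (c3 (Bn u)))) : R)) : R -> R).
  assert (Hg : forall u, g u = re (dinner (V2 u) (Bn u))) by (intro; reflexivity).
  assert (Hval : forall u, (V2 u = Bn u -> g u = 1) /\ (V2 u = vopp (Bn u) -> g u = -1)).
  { intro u; rewrite Hg; split; intro E; rewrite E.
    - rewrite HB; reflexivity.
    - unfold vopp; rewrite dinner_scale_l, HB; cbn [re dmul dopp done_]; ring. }
  assert (Hc : continuous g t).
  { apply (ex_derive_continuous (K:=R_AbsRing) (V:=R_NormedModule)).
    destruct HV as [[a1 b1] [[a2 b2] [a3 b3]]].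
    destruct HD as [[e1 f1] [[e2 f2] [e3 f3]]].
    unfold g.
    apply (ex_derive_plus (K:=R_AbsRing) (V:=R_NormedModule)
      (fun u => opp (re (c1 (V2 u)) * re (c1 (Bn u))))
      (fun u => plus (re (c2 (V2 u)) * re (c2 (Bn u))) (re (c3 (V2 u)) * re (c3 (Bn u))))).
    - apply (ex_derive_opp (K:=R_AbsRing) (V:=R_NormedModule)
               (fun u => re (c1 (V2 u)) * re (c1 (Bn u)))).
      apply ex_derive_mult; [exists (re (c1 D2))|exists (re (c1 DB))]; assumption.
    - apply (ex_derive_plus (K:=R_AbsRing) (V:=R_NormedModule)
               (fun u => re (c2 (V2 u)) * re (c2 (Bn u)))
               (fun u => re (c3 (V2 u)) * re (c3 (Bn u)))).
      + apply ex_derive_mult; [exists (re (c2 D2))|exists (re (c2 DB))]; assumption.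
      + apply ex_derive_mult; [exists (re (c3 D2))|exists (re (c3 DB))]; assumption. }
  assert (HL : locally t (fun u => ball (g t) (mkposreal 1 Rlt_0_1) (g u))).
  { apply (proj1 (filterlim_locally g (g t))). exact Hc. }
  destruct (Hs t) as [Et|Et]; [left|right].
  - apply (vec_derive_unique V2 t); [assumption|].
    apply (vec_derive_ext_loc Bn); [|assumption].
    eapply filter_imp; [|exact HL]. intros u Hu.
    destruct (Hs u) as [Eu|Eu]; [symmetry; assumption|].
    exfalso. rewrite (proj1 (Hval t) Et), (proj2 (Hval u) Eu) in Hu.
    unfold ball in Hu; simpl in Hu; unfold AbsRing_ball, abs, minus, plus, opp in Hu; simpl in Hu.
    apply Rabs_def2 in Hu; lra.
  - apply (vec_derive_unique V2 t); [assumption|].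
    apply (vec_derive_ext_loc (fun u => vopp (Bn u))); [|apply vec_derive_opp; assumption].
    eapply filter_imp; [|exact HL]. intros u Hu.
    destruct (Hs u) as [Eu|Eu]; [|symmetry; assumption].
    exfalso. rewrite (proj2 (Hval t) Et), (proj1 (Hval u) Eu) in Hu.
    unfold ball in Hu; simpl in Hu; unfold AbsRing_ball, abs, minus, plus, opp in Hu; simpl in Hu.
    apply Rabs_def2 in Hu; lra.
Qed.

Theorem corollary3p4
  (alpha T N Bn : R -> dvec) (s sigma kappa tau : R -> dual)
  (beta V1 V2 V3 : R -> dvec) (ss sigmas P Q : R -> dual)
  (lambda : R -> dual) :
  timelike_frenet alpha T N Bn s sigma kappa tau ->
  spacelike_tbinormal_frenet beta V1 V2 V3 ss sigmas P Q ->
  mannheim_pair alpha Bn beta V2 lambda ->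
  forall t : R,
    dsub (dsq (P t)) (dsq (Q t)) =
    dmul (dsq (tau t)) (dsq (ddiv (sigma t) (sigmas t))).
Proof.
  intros H1 H2 H3 t.
  assert (HB : forall u, dinner (Bn u) (Bn u) = done_) by (intro u; apply (H1 u)).
  assert (Hs : forall u, V2 u = Bn u \/ V2 u = vopp (Bn u)) by (intro u; apply (H3 u)).
  destruct (H1 t) as (_ & _ & _ & _ & HNN & _ & _ & _ & _ & _ & _ & HdB).
  destruct (H2 t) as (Hsp & _ & _ & H11 & _ & H33 & _ & H13 & _ & _ & HdV2 & _).
  apply key with (V1 := V1 t) (V3 := V3 t) (N := N t); try assumption.
  exact (sign_loc V2 Bn t _ _ HB Hs HdV2 HdB).
Qed.
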